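(* Let $G$ be a finite supersolvable group and let $A$, $B$ be conjugacy classes of $G$ such that $AB\cap \mathbf{Z}(G)\neq\emptyset$. Then $$\operatorname{dl}(G/\mathbf{C}_G(A))\le 2\,\eta(AB)-1.$$
   Context: For a nonempty subset $X\subseteq G$ that is $G$-invariant (i.e. $g^{-1}Xg=X$ for all $g\in G$), $\eta(X)$ denotes the number of distinct conjugacy classes of $G$ whose union is $X$. For conjugacy classes $A,B$, $AB=\{ab\mid a\in A,b\in B\}$ (a $G$-invariant set). $\mathbf{C}_G(A)=\{g\in G\mid g^{-1}ag=a\text{ for all }a\in A\}$, $\mathbf{Z}(G)$ is the center, and $\operatorname{dl}$ denotes derived length. *)

(* Defs.v *)
From mathcomp Require Import all_boot all_fingroup all_solvable.
Set Implicit Arguments. Unset Strict Implicit. Unset Printing Implicit Defensive.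
Local Open Scope group_scope.

Definition supersolvable (gT : finGroupType) (G : {group gT}) : Prop :=
  exists s : seq {group gT},
    [/\ head 1%G s = 1%G :> {set gT},
        last 1%G s = G :> {set gT},
        all (fun H : {group gT} => H <| G) s &
        path (fun H K : {group gT} => (H \subset K) && cyclic (K / H)) 1%G s].

(* derived length: the least n with H^`(n) = 1.  For solvable H such an n
   exists and is < #|H|.+1 (the derived series strictly decreases until it
   reaches 1), so the search below returns the true derived length. *)
Definition dl (gT : finGroupType) (H : {set gT}) : nat :=
  find (fun n => H^`(n) == 1) (iota 0 #|H|.+1).

Definition eta (gT : finGroupType) (G : {group gT}) (X : {set gT}) : nat :=
  #|[set C in classes G | C \subset X]|.

(* Main.v *)
Require Import Defs.
From mathcomp Require Import all_boot all_fingroup all_solvable.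
From mathcomp Require Import zify.
Set Implicit Arguments. Unset Strict Implicit. Unset Printing Implicit Defensive.
Local Open Scope group_scope.

Section S.
Variable gT : finGroupType.
Implicit Types (A : {set gT}) (G H K Y : {group gT}).

Lemma comm_gen_sub A K Y : A \subset 'N(K) -> Y \subset 'N(K) ->
  [~: A, Y] \subset K -> [~: <<A>>, Y] \subset K.
Proof.
move=> nA nY s; rewrite -quotient_cents2 ?gen_subG // quotient_gen //.
by rewrite gen_subG quotient_cents2.
Qed.

Lemma der1_cent_cyclic K Y : cyclic K -> Y \subset 'N(K) -> Y^`(1) \subset 'C(K).
Proof.
move=> cK nKY; rewrite -ker_conj_aut ker_trivg_morphim.
rewrite (subset_trans (der_sub 1 Y)) //= morphim_der //.
have ab: abelian (conj_aut K @* Y).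
  exact: abelianS (Aut_conj_aut K Y) (Aut_cyclic_abelian cK).
by move/derG1P: ab => ->.
Qed.

Lemma step_quo (X : {group gT}) K Y : cyclic K -> Y \subset 'N(K) -> [~: X, Y] \subset K ->
  [~: X, Y^`(2)] \subset [1].
Proof.
move=> cK nKY sAYK.
have cY1: Y^`(1) \subset 'C(K) := der1_cent_cyclic cK nKY.
have h1: [~: X, Y^`(1), Y^`(1)] :=: 1.
  apply/trivgP; apply: subset_trans (_ : [~: K, Y^`(1)] \subset [1]).
    apply: commgSS => //; exact: subset_trans (commgSS (subxx X) (der_sub 1 Y)) sAYK.
  by apply/trivgP/commG1P; rewrite centsC.
have h2: [~: Y^`(1), X, Y^`(1)] :=: 1 by rewrite (commGC (Y^`(1)) X).
have := three_subgroup h2 h1.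
by rewrite commGC => ->.
Qed.

End S.

Section S2.
Variable gT : finGroupType.
Implicit Types (A : {set gT}) (G H K Y : {group gT}).

Lemma step_lift G A H K Y : H <| G -> K <| G -> H \subset K -> cyclic (K / H) ->
  A \subset G -> Y \subset G -> [~: A, Y] \subset K -> [~: A, Y^`(2)] \subset H.
Proof.
move=> /andP[sHG nHG] /andP[sKG nKG] sHK cKH sAG sYG sAYK.
have nY2: Y^`(2) \subset 'N(H) by apply: subset_trans (der_sub 2 Y) (subset_trans sYG nHG).
have nY: Y \subset 'N(H) := subset_trans sYG nHG.
have nA: <<A>> \subset 'N(H) by rewrite gen_subG; exact: subset_trans sAG nHG.
apply: subset_trans (commgSS (subset_gen A) (subxx _)) _.
rewrite -quotient_sub1 ?comm_subG // quotientR // quotient_der //.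

apply: (@step_quo _ (<<A>> / H)%G (K / H)%G (Y / H)%G cKH).
  by apply: quotient_norms; exact: subset_trans sYG nKG.
rewrite -quotientR //; apply: quotientS.
apply: comm_gen_sub => //; [exact: subset_trans sAG nKG | exact: subset_trans sYG nKG].
Qed.

Lemma derD Y m n : (Y^`(n))^`(m) = Y^`(m + n).
Proof. by elim: m => // m IH; rewrite addSn !dergSn IH. Qed.

Lemma der_mono Y m n : m <= n -> Y^`(n) \subset Y^`(m).
Proof.
move=> le; rewrite -(subnK le) -derD; exact: der_sub.
Qed.

Lemma find_le (p : pred nat) m n : p n -> find p (iota 0 m) <= n.
Proof.
move=> pn; case: (ltnP n m) => [lt|ge].
  rewrite leqNgt; apply/negP => /(before_find 0).
  by rewrite nth_iota // add0n pn.
by apply: leq_trans (find_size _ _) _; rewrite size_iota.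
Qed.


Lemma eta_mono G (X Z : {set gT}) : X \subset Z -> eta G X <= eta G Z.
Proof.
move=> sXZ; apply: subset_leq_card; apply/subsetP => C.
rewrite !inE => /andP[-> sCX] /=; exact: subset_trans sCX sXZ.
Qed.

Lemma eta_lt G (X Z : {set gT}) u : X \subset Z -> u \in Z -> u \notin X -> u \in G ->
  (forall v g, v \in Z -> g \in G -> v ^ g \in Z) -> eta G X < eta G Z.
Proof.
move=> sXZ Zu nXu Gu invZ; apply: proper_card; apply/properP; split.
  apply/subsetP => C; rewrite !inE => /andP[-> sCX] /=; exact: subset_trans sCX sXZ.
exists (u ^: G).
  rewrite inE mem_classes //=; apply/subsetP => _ /imsetP[g Gg ->]; exact: invZ.
rewrite inE negb_and; apply/orP; right; apply/subsetPn; exists u => //; exact: class_refl.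
Qed.

Lemma eta_ge1 G (X : {set gT}) : 1 \in X -> 0 < eta G X.
Proof.
move=> X1; rewrite card_gt0; apply/set0Pn; exists (1 ^: G).
by rewrite inE mem_classes //= class1G sub1set.
Qed.

Definition Pdl G (A D H : {set gT}) := forall Y : {group gT}, Y \subset G ->
  [~: A, Y] \subset H -> [~: A, Y^`(2 * (eta G (D :&: H)).-1)] \subset [1].

Lemma chain_ind G (A D : {set gT}) :
  A \subset G -> 1 \in D ->
  (forall x y, x \in A -> y \in G -> [~ x, y] \in D) ->
  (forall v g, v \in D -> g \in G -> v ^ g \in D) -> D \subset G ->
  forall (s : seq {group gT}) (H0 : {group gT}), H0 <| G -> Pdl G A D H0 ->
  all (fun H : {group gT} => H <| G) s ->
  path (fun H K : {group gT} => (H \subset K) && cyclic (K / H)) H0 s ->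
  Pdl G A D (last H0 s).
Proof.
move=> sAG D1 commD invD sDG; elim=> [|K s IH] H0 nH0 PH0 //=.
case/andP=> nK alls /andP[/andP[sHK cKH] p]; apply: (IH _ nK _ alls p).
move=> Y sYG sAYK.
case: (boolP (D :&: K \subset H0)) => [sub | nsub].
  have sAYH: [~: A, Y] \subset H0.
    rewrite gen_subG; apply/subsetP => _ /imset2P[x y Ax Yy ->].
    apply: (subsetP sub); rewrite inE commD ?(subsetP sYG) //=.
    exact: (subsetP sAYK) _ (mem_commg Ax Yy).
  apply: subset_trans (PH0 Y sYG sAYH); apply: commgSS => //; apply: der_mono.
  by rewrite leq_mul2l /= -!subn1 leq_sub2r // eta_mono // setIS.
case/subsetPn: nsub => u Du nHu.
have lt: eta G (D :&: H0) < eta G (D :&: K).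
  apply: (eta_lt (u := u)) => //; first exact: setIS.
  - by rewrite inE negb_and nHu orbT.
  - by apply: (subsetP sDG); case/setIP: Du.
  move=> v g /setIP[Dv Kv] Gg; rewrite inE invD //=.
  by rewrite memJ_norm // (subsetP (normal_norm nK)).
have ge1: 0 < eta G (D :&: H0) by apply: eta_ge1; rewrite inE D1 group1.
have sAY2H := step_lift nH0 nK sHK cKH sAG sYG sAYK.
have := PH0 (Y^`(2))%G (subset_trans (der_sub _ _) sYG) sAY2H.
rewrite /= derD => h; apply: subset_trans h; apply: commgSS => //; apply: der_mono.
rewrite -mulnSr leq_mul2l /= prednK // -ltnS prednK //; exact: leq_ltn_trans lt.
Qed.

End S2.

Lemma zcomm_eq (gT : finGroupType) (z x y : gT) : commute z x -> commute z y ->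
  z * (x^-1 * y) = y ^ x * (z * x^-1).
Proof.
move=> cx cy; have ci: commute z x^-1 by apply: commuteV.
rewrite conjgE ci !mulgA mulgK.
rewrite ci -!mulgA; congr (_ * _); exact: cy.
Qed.

Lemma arith_t (e m : nat) : e.+1 <= m -> (2 * e <= 2 * m - 1)%N.
Proof. lia. Qed.

Theorem corollaryC (gT : finGroupType) (G : {group gT}) (A B : {set gT}) :
  supersolvable G ->
  A \in classes G -> B \in classes G ->
  A * B :&: 'Z(G) != set0 ->
  dl (G / 'C_G(A)) <= (2 * eta G (A * B)%g - 1)%N.
Proof.
move=> [s [_ hlast hall hpath]] cA cB.
case/set0Pn => _ /setIP[/mulsgP[a b Aa Bb ->] Zab].
set z := a * b in Zab.
case/imsetP: cA => a0 Ga0 defA; case/imsetP: cB => b0 Gb0 defB.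
have Ga: a \in G by rewrite defA in Aa; exact: (subsetP (class_subG Ga0 (subxx G))).
have Gb: b \in G by rewrite defB in Bb; exact: (subsetP (class_subG Gb0 (subxx G))).
have {defA} defA: A = a ^: G by rewrite defA; apply/esym/class_eqP; rewrite -defA.
have {defB} defB: B = b ^: G by rewrite defB; apply/esym/class_eqP; rewrite -defB.
have sAG: A \subset G by rewrite defA class_subG.
have AJ: forall x g, x \in A -> g \in G -> x ^ g \in A.
  move=> x g; rewrite defA => /imsetP[h Gh ->] Gg; rewrite -conjgM memJ_class //.
  exact: groupM.
have Gz: z \in G by case/setIP: Zab.
have cz: forall g, g \in G -> commute z g.
  by move=> g Gg; case/setIP: Zab => _ /centP; apply.
have zfix: forall g, g \in G -> z ^ g = z.
  by move=> g Gg; rewrite conjgE; move: (cz g Gg); rewrite /commute => ->; rewrite mulKg.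
pose D := [set x^-1 * y | x in A, y in A].
have sDG: D \subset G.
  apply/subsetP => _ /imset2P[x y Ax Ay ->].
  by rewrite groupM ?groupV ?(subsetP sAG).
have D1: 1 \in D by apply/imset2P; exists a a => //; rewrite mulVg.
have commD: forall x y, x \in A -> y \in G -> [~ x, y] \in D.
  by move=> x y Ax Gy; rewrite commgEl; apply/imset2P; exists x (x ^ y) => //; apply: AJ.
have invD: forall v g, v \in D -> g \in G -> v ^ g \in D.
  move=> _ g /imset2P[x y Ax Ay ->] Gg; rewrite conjMg conjVg.
  by apply/imset2P; exists (x ^ g) (y ^ g) => //; apply: AJ.
have P1: Pdl G A D 1%G.
  move=> Y sYG sAY1 /=; apply: subset_trans sAY1.
  by apply: commgSS => //; apply: der_sub.
have := chain_ind sAG D1 commD invD sDG (normal1 G) P1 hall hpath.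
rewrite hlast => /(_ G (subxx G) (comm_subG sAG (subxx G))).
rewrite (setIidPl sDG) => hC.
set n := (2 * _)%N in hC.
have sGnC: G^`(n) \subset 'C_G(A).
  rewrite subsetI der_sub /=; apply/commG1P; rewrite commGC; exact/trivgP.
have nCG: G \subset 'N('C_G(A)).
  by rewrite normsI ?normG // norms_cent // defA class_norm.
have dln: dl (G / 'C_G(A)) <= n.
  rewrite /dl; apply: find_le.
  by rewrite -quotient_der // quotientS1.
apply: leq_trans dln _.
have etale: eta G D <= eta G (A * B).
  have zab: z * a^-1 = b.
    by have := commuteV (cz a Ga); rewrite /commute => ->; rewrite /z mulKg.
  rewrite /eta -(card_imset _ (@lcoset_inj _ z)).
  apply: subset_leq_card; apply/subsetP => w /imsetP[C]; rewrite inE => /andP[cC sCD] ->{w}.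
  case/imsetP: cC => c Gc defC.
  have eqC: [set z] * C = (z * c) ^: G.
    apply/setP => w; apply/idP/idP.
      case/mulsgP => _ d /set1P-> ; rewrite defC => /imsetP[g Gg ->] ->.
      by rewrite -{1}(zfix g Gg) -conjMg memJ_class.
    case/imsetP => g Gg ->; rewrite conjMg zfix // defC.
    by apply: mem_mulg; [exact: set11 | exact: memJ_class].
  rewrite inE /= eqC mem_classes ?groupM //= -eqC.
  apply/subsetP => _ /mulsgP[_ d /set1P-> Cd ->].
  case/imset2P: (subsetP sCD d Cd) => x y Ax Ay ->.
  rewrite zcomm_eq; try by apply: cz; apply: (subsetP sAG).
  apply: mem_mulg; first by apply: AJ => //; apply: (subsetP sAG).
  move: Ax; rewrite defA defB => /imsetP[g Gg ->].
  rewrite -(zfix g Gg) -conjVg -conjMg zab; exact: memJ_class.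
rewrite /n; move: etale; case: (eta G D) => [|e] /= le; first by [].
exact: arith_t le.
Qed.
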